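(* Let $m,a,b,n$ be positive integers with $n\ge 3$ and $(3m+1)/2\le a<b\le (5m-1)/3$. Let $A\subset\mathbb N_+$ with $|A|=n-1$, $\min A=a$, $\max A=b$, such that the sums $x_1+\dots+x_h$, over all $h\in\{1,2,3\}$ and all multisets $\{x_1,\dots,x_h\}$ of elements of $A$, are pairwise distinct modulo $m$. Let $S=\langle\{m\}\cup A\rangle_{4m}$ and $P_4=P\cap[4m,5m-1]$. Then the integer interval $4m+\big[\lfloor (m+1)/3\rfloor,\ \lceil (m-1)/2\rceil\big]$ is contained in $P_4$, and $|P_4|\ge m/6$.
   Context: $\mathbb N=\{0,1,2,\dots\}$, $\mathbb N_+=\mathbb N\setminus\{0\}$; $[x,y]=\{z\in\mathbb Z: x\le z\le y\}$, and $t+[x,y]=\{t+z: z\in[x,y]\}$. For a finite set $B$ of positive integers and a positive integer $t$, $\langle B\rangle_t=\big(\sum_{x\in B}\mathbb N x\big)\cup\{z\in\mathbb Z: z\ge t\}$; this is a numerical semigroup. For a numerical semigroup $S$, let $S^*=S\setminus\{0\}$, $D=S^*+S^*$ and $P=S^*\setminus D$ (the primitive elements). *)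

(* Defs.v *)
From mathcomp Require Import all_boot.
Set Implicit Arguments. Unset Strict Implicit. Unset Printing Implicit Defensive.

Definition in_span (B : seq nat) (z : nat) : Prop :=
  exists c : nat -> nat, z = \sum_(x <- B) c x * x.

(* <B>_t = (sum_{x in B} N x) ∪ {z >= t}  (all elements are non-negative, so nat suffices). *)
Definition in_semigroup (B : seq nat) (t : nat) (z : nat) : Prop :=
  in_span B z \/ t <= z.

Definition in_Sstar (B : seq nat) (t : nat) (z : nat) : Prop :=
  in_semigroup B t z /\ z <> 0.

Definition in_D (B : seq nat) (t : nat) (z : nat) : Prop :=
  exists x y, in_Sstar B t x /\ in_Sstar B t y /\ z = x + y.

Definition in_P (B : seq nat) (t : nat) (z : nat) : Prop :=
  in_Sstar B t z /\ ~ in_D B t z.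

Definition in_P4 (m : nat) (A : seq nat) (z : nat) : Prop :=
  in_P (m :: A) (4 * m) z /\ 4 * m <= z <= 5 * m - 1.

(* Main.v *)
Require Import Defs.
From mathcomp Require Import all_boot.
From mathcomp Require Import zify.
From Stdlib Require Import ClassicalEpsilon.

Lemma span_add B x y : in_span B x -> in_span B y -> in_span B (x + y).
Proof.
move=> [cx ->] [cy ->]; exists (fun v => cx v + cy v).
by rewrite -big_split /=; apply: eq_bigr => v _; rewrite mulnDl.
Qed.

Lemma span_decomp m A a b z : (forall x, x \in A -> a <= x) ->
  (forall x, x \in A -> x <= b) -> in_span (m :: A) z ->
  exists C N T, z = C * m + T /\ a * N <= T /\ T <= b * N.
Proof.
move=> Ha Hb [c ->]; rewrite big_cons.
exists (c m), (\sum_(x <- A) c x), (\sum_(x <- A) c x * x); split => //.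
rewrite !big_distrr /=; split; rewrite big_seq_cond [X in _ <= X]big_seq_cond;
  apply: leq_sum => x /andP [xA _].
- have := Ha x xA; nia.
- have := Hb x xA; nia.
Qed.

Definition decP (P : Prop) : bool :=
  if excluded_middle_informative P then true else false.

Lemma decPP (P : Prop) : decP P <-> P.
Proof. by rewrite /decP; case: excluded_middle_informative. Qed.

Theorem mainTheorem8 (m a b n : nat) (A : seq nat) :
  0 < m -> 0 < a -> 0 < b -> 3 <= n ->
  3 * m + 1 <= 2 * a -> a < b -> 3 * b <= 5 * m - 1 ->
  uniq A -> size A = n - 1 -> all (fun x => 0 < x) A ->
  a \in A -> (forall x, x \in A -> a <= x) ->
  b \in A -> (forall x, x \in A -> x <= b) ->
  (* sums over all multisets of size 1, 2, 3 of elements of A are pairwise distinct mod m *)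
  (forall s t : seq nat,
      0 < size s <= 3 -> 0 < size t <= 3 ->
      all (fun x => x \in A) s -> all (fun x => x \in A) t ->
      ~~ perm_eq s t -> sumn s != sumn t %[mod m]) ->
  (forall k, (m + 1) %/ 3 <= k <= (m.-1 + 1) %/ 2 -> in_P4 m A (4 * m + k)) /\
  (exists P4 : seq nat, uniq P4 /\ (forall z, z \in P4 <-> in_P4 m A z) /\ m <= 6 * size P4).
Proof.
move=> m0 a0 b0 n3 ha ab hb _ _ _ _ Ha _ Hb _.
have Hm : 11 <= m by lia.
have ge_m : forall x, in_Sstar (m :: A) (4 * m) x -> m <= x.
  move=> x [[Hs|Hx] nz]; last by lia.
  have [C [N [T [E [h1 h2]]]]] := span_decomp m _ _ _ _ Ha Hb Hs.
  move: nz; rewrite E => nz; clear E.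
  case: C nz => [|C] nz; last by nia.
  case: N h1 h2 => [|N] h1 h2.
    move: nz; rewrite muln0 in h2.
    lia.
  have : a <= a * N.+1 by rewrite leq_pmulr.
  lia.
have part1 : forall k, (m + 1) %/ 3 <= k <= (m.-1 + 1) %/ 2 -> in_P4 m A (4 * m + k).
  move=> k hk; split; last by lia.
  split; first by split; [right; lia | lia].
  move=> [x [y [Hx [Hy E]]]].
  have mx := ge_m _ Hx; have my := ge_m _ Hy.
  have spx : in_span (m :: A) x.
    case: Hx => [[//|?] _]; lia.
  have spy : in_span (m :: A) y.
    case: Hy => [[//|?] _]; lia.
  have [C [N [T [E2 [h1 h2]]]]] := span_decomp m _ _ _ _ Ha Hb (span_add _ _ _ spx spy).
  rewrite -E in E2.
  case: N h1 h2 => [|[|[|N]]] h1 h2.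
  - have : T = 0 by lia.
    move=> T0; subst T.
    case: (leqP C 4) => hC; first by nia.
    nia.
  - case: (leqP C 2) => hC; first by nia.
    nia.
  - case: (leqP C 1) => hC; first by nia.
    nia.
  - nia.
split => //.
set lo := (m + 1) %/ 3; set hi := (m.-1 + 1) %/ 2.
exists (filter (fun z => decP (in_P4 m A z)) (iota (4 * m) m)); split.
  by rewrite filter_uniq // iota_uniq.
split.
  move=> z; rewrite mem_filter mem_iota; split; first by case/andP => /decPP.
  move=> H; apply/andP; split; first by apply/decPP.
  case: H => _; lia.
have sub : {subset iota (4 * m + lo) (hi - lo + 1) <=
            filter (fun z => decP (in_P4 m A z)) (iota (4 * m) m)}.
  move=> z; rewrite mem_iota => /andP [h1 h2].
  have := part1 (z - 4 * m).
  rewrite /lo /hi in h1 h2 *.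
  have -> : 4 * m + (z - 4 * m) = z by lia.
  move=> H; have {}H := H ltac:(lia).
  rewrite mem_filter mem_iota; apply/andP; split; first by apply/decPP.
  case: H => _; lia.
have := uniq_leq_size (iota_uniq _ _) sub.
rewrite size_iota /lo /hi => HH. apply: leq_trans (leq_mul (leqnn 6) HH). clear. lia.
Qed.
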